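(* Consider the discrete all-pay auction in the model with ties with $n\in\{2,3\}$ bidders whose values are drawn independently and uniformly from $X=\{0,1,\dots,x\}$, $x\ge10$. Let $\beta$ be a symmetric equilibrium bidding function. Then $\beta(x-1)\le\beta(x-2)+1$ and $\beta(x)\le\beta(x-1)+1$.
   Context: Model. There are $n$ risk-neutral bidders competing for one indivisible object. Values and bids lie in $X=\{0,1,2,\dots,x\}$. Each bidder privately learns a value drawn independently and uniformly from $X$. Each bidder submits a bid in $X$. A (pure) strategy is a bidding function $\beta:X\to X$. In the model with ties, if $m$ bidders submit the highest bid, each of them wins with probability $1/m$. In the all-pay auction, a bidder with value $v_i$ bidding $b_i$ gets expected payoff $v_i\Pr(i\text{ wins})-b_i$ (everyone pays their bid). An equilibrium is a profile of bidding functions such that each bidder's bidding function maximises their expected payoff given the others' bidding functions (a pure-strategy Bayes–Nash equilibrium) and such that no bidder uses a weakly dominated bidding function (a bidding function is weakly dominated if some other bidding function yields at least as high expected payoff against every profile of opponents' bidding functions, and strictly higher against some). A symmetric equilibrium is an equilibrium in which all bidders use the same bidding function. *)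

(* Defs.v *)
From mathcomp Require Import all_boot all_order all_algebra.
Set Implicit Arguments. Unset Strict Implicit. Unset Printing Implicit Defensive.
Import Order.TTheory GRing.Theory Num.Theory.
Local Open Scope ring_scope.

(* Values and bids lie in X = {0,...,x}, represented by 'I_x.+1. *)
Definition bidfun (x : nat) := 'I_x.+1 -> 'I_x.+1.

Definition winprob (b : nat) (bs : seq nat) : rat :=
  if all (fun c => (c <= b)%N) bs
  then (1 + (count (pred1 b) bs)%:R)^-1 else 0.

(* Interim expected payoff of a bidder with value v bidding b in the all-pay
   auction, against m opponents using bidding functions ops, opponents'
   values i.i.d. uniform on X. *)
Definition interim_payoff (x m : nat) (ops : 'I_m -> bidfun x)
    (v b : 'I_x.+1) : rat :=
  \sum_(w : {ffun 'I_m -> 'I_x.+1})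
     ((x.+1)%:R^-1) ^+ m *
     ((v : nat)%:R * winprob b [seq (ops j (w j) : nat) | j <- enum 'I_m]
      - (b : nat)%:R).

Definition payoff (x m : nat) (ops : 'I_m -> bidfun x) (s : bidfun x) : rat :=
  \sum_(v : 'I_x.+1) (x.+1)%:R^-1 * interim_payoff ops v (s v).

(* Weak dominance (m = number of opponents). *)
Definition weakly_dominated (x m : nat) (s : bidfun x) : Prop :=
  exists s' : bidfun x,
    (forall ops : 'I_m -> bidfun x, payoff ops s <= payoff ops s') /\
    (exists ops : 'I_m -> bidfun x, payoff ops s < payoff ops s').

Definition symmetric_equilibrium (n x : nat) (beta : bidfun x) : Prop :=
  (forall s : bidfun x,
      payoff (fun _ : 'I_n.-1 => beta) s <= payoff (fun _ : 'I_n.-1 => beta) beta)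
  /\ ~ weakly_dominated n.-1 beta.

(* Main.v *)
Require Import Defs.
From mathcomp Require Import all_boot all_order all_algebra.
From mathcomp Require Import ring lra zify.
Set Implicit Arguments. Unset Strict Implicit. Unset Printing Implicit Defensive.
Import Order.TTheory GRing.Theory Num.Theory.
Local Open Scope ring_scope.

Lemma inv1k_gt0 (k : nat) : 0 < (1 + k%:R : rat).
Proof. by rewrite ltr_wpDr. Qed.

Lemma inv1k_le1 (k : nat) : (1 + k%:R : rat)^-1 <= 1.
Proof. by rewrite invf_le1 ?inv1k_gt0 // lerDl. Qed.

Lemma inv1k_le2 (k : nat) : (0 < k)%N -> (1 + k%:R : rat)^-1 <= 2^-1.
Proof.
move=> k0; rewrite lef_pV2 ?inv1k_gt0 ?posrE //.
all: try (by []).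
have : (1 : rat) <= k%:R by rewrite ler1n.
lra.
exact: inv1k_gt0.
Qed.

Lemma count0 y (bs : seq nat) : y \notin bs -> count (pred1 y) bs = 0%N.
Proof. by move=> h; apply/eqP; rewrite -leqn0 leqNgt -has_count has_pred1. Qed.

Lemma countpos y (bs : seq nat) : y \in bs -> (0 < count (pred1 y) bs)%N.
Proof. by rewrite -has_count has_pred1. Qed.

Lemma wp_ge0 b bs : 0 <= winprob b bs.
Proof. rewrite /winprob; case: ifP => // _; by rewrite invr_ge0 ltW ?inv1k_gt0. Qed.

Lemma wp_le1 b bs : winprob b bs <= 1.
Proof. rewrite /winprob; case: ifP => // _; exact: inv1k_le1. Qed.

Lemma wp_mono b bs : winprob b bs <= winprob b.+1 bs.
Proof.
rewrite {1}/winprob; case: ifP => [/allP H|_]; last exact: wp_ge0.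
have Ha : all (fun c => (c <= b.+1)%N) bs.
  by apply/allP => c cin; exact: leqW (H c cin).
have hn : b.+1 \notin bs by apply/negP => hin; move: (H _ hin) => /=; rewrite ltnn.
by rewrite /winprob Ha (count0 hn) /= addr0 invr1 inv1k_le1.
Qed.

Lemma wp_le_half c bs : winprob c bs <= 1 - (c \in bs)%:R / 2.
Proof.
case: (boolP (c \in bs)) => h /=.
  rewrite /winprob; case: ifP => _.
    have := inv1k_le2 (countpos h). lra.
  lra.
by rewrite subr0 wp_le1.
Qed.

Lemma wp_top c bs : all (fun a => (a <= c)%N) bs -> winprob c.+1 bs = 1.
Proof.
move=> /allP H; rewrite /winprob.
have -> : all (fun a => (a <= c.+1)%N) bs by apply/allP => a ain; exact: leqW (H a ain).
rewrite count0 ?addr0 ?invr1 //.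
by apply/negP => hin; move: (H _ hin) => /=; rewrite ltnn.
Qed.

Lemma wp_step b bs : b \notin bs ->
  winprob b.+1 bs - winprob b bs <= (b.+1 \in bs)%:R / 2.
Proof.
move=> hb; case: (boolP (b.+1 \in bs)) => h.
  have -> : winprob b bs = 0.
    rewrite /winprob; case: ifP => // /allP H.
    by move: (H _ h); rewrite ltnn.
  rewrite subr0 /=. rewrite /winprob; case: ifP => _.
    have := inv1k_le2 (countpos h). lra.
  lra.
have -> : winprob b.+1 bs = winprob b bs.
  rewrite /winprob (count0 h) (count0 hb).
  have -> : all (fun c => (c <= b.+1)%N) bs = all (fun c => (c <= b)%N) bs.
    apply: eq_in_all => c cin; rewrite leq_eqVlt ltnS.
    have : c != b.+1 by apply: contraNneq h => <-.
    by move/negbTE ->.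
  by [].
rewrite subrr /=. lra.
Qed.

Definition W (x m : nat) (beta : bidfun x) (b : nat) : rat :=
  \sum_(w : {ffun 'I_m -> 'I_x.+1})
     ((x.+1)%:R^-1) ^+ m * winprob b [seq (beta (w j) : nat) | j <- enum 'I_m].

Lemma r_gt0 (x : nat) : 0 < ((x.+1)%:R : rat)^-1.
Proof. by rewrite invr_gt0 ltr0n. Qed.

Lemma sum_weights x m :
  \sum_(w : {ffun 'I_m -> 'I_x.+1}) (((x.+1)%:R : rat)^-1)^+m = 1.
Proof.
rewrite sumr_const card_ffun !card_ord -[_ *+ (_ ^ _)%N]mulr_natr natrX -exprMn mulVf ?expr1n //.
by rewrite pnatr_eq0.
Qed.

Lemma interimE x m (beta : bidfun x) (v b : 'I_x.+1) :
  interim_payoff (fun _ : 'I_m => beta) v b = (v : nat)%:R * W m beta b - (b : nat)%:R.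
Proof.
rewrite /interim_payoff /W mulr_sumr.
transitivity (\sum_(w : {ffun 'I_m -> 'I_x.+1})
  ((v : nat)%:R * (((x.+1)%:R^-1) ^+ m * winprob b [seq (beta (w j) : nat) | j <- enum 'I_m])
   - ((x.+1)%:R^-1) ^+ m * (b : nat)%:R)).
  by apply: eq_bigr => w _; ring.
by rewrite sumrB -mulr_suml sum_weights mul1r.
Qed.

Lemma opt x m (beta : bidfun x) :
  (forall s : bidfun x, payoff (fun _ : 'I_m => beta) s <= payoff (fun _ : 'I_m => beta) beta) ->
  forall v b : 'I_x.+1, interim_payoff (fun _ : 'I_m => beta) v b <= interim_payoff (fun _ : 'I_m => beta) v (beta v).
Proof.
move=> H v b; have := H (fun u => if u == v then b else beta u).
rewrite /payoff (bigD1 v) //= [in X in _ <= X -> _](bigD1 v) //= eqxx.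
under eq_bigr => i /negbTE -> do [].
rewrite lerD2r ler_pM2l //; exact: r_gt0.
Qed.

Lemma W_mono x m (beta : bidfun x) b b' : (b <= b')%N -> W m beta b <= W m beta b'.
Proof.
move=> /subnK <-; elim: (b' - b)%N => [|k IH] //.
apply: le_trans IH _; rewrite addSn; apply: ler_sum => w _.
rewrite ler_wpM2l ?wp_mono //; apply: exprn_ge0; exact: ltW (r_gt0 x).
Qed.

Lemma mono_arith (V V' B B' a c : rat) : 0 <= V -> V + 1 <= V' -> B' + 1 <= B ->
  c <= a -> V * c - B' <= V * a - B -> V' * a - B <= V' * c - B' -> False.
Proof.
move=> h0 h1 h2 h3 h4 h5.
have hd : (V' - V - 1) * (a - c) >= 0 by apply: mulr_ge0; lra.
nra.
Qed.

Lemma beta_mono x m (beta : bidfun x) :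
  (forall s : bidfun x, payoff (fun _ : 'I_m => beta) s <= payoff (fun _ : 'I_m => beta) beta) ->
  forall v v' : 'I_x.+1, (v <= v')%N -> (beta v <= beta v')%N.
Proof.
move=> H v v' hv; rewrite leqNgt; apply/negP => hlt.
have h1 := opt H v (beta v'); have h2 := opt H v' (beta v).
rewrite !interimE in h1 h2.
have hw := W_mono m beta (ltnW hlt).
have hvv : v != v' by apply: contraTneq hlt => ->; rewrite ltnn.
have hv1 : ((v : nat).+1 <= v')%N by rewrite ltn_neqAle hv andbT.
have hB : ((beta v' : nat).+1 <= beta v)%N by [].
move: hv1 hB; rewrite -!(ler_nat rat) -!natr1 => hv1 hB.
exact: (mono_arith (ler0n rat v) hv1 hB hw h1 h2).
Qed.

Lemma enum_I1 : enum 'I_1 = [:: ord0].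
Proof. by apply: (inj_map val_inj); rewrite val_enum_ord. Qed.

Lemma enum_I2 : enum 'I_2 = [:: ord0; ord_max].
Proof. by apply: (inj_map val_inj); rewrite val_enum_ord. Qed.

Lemma W1E x (beta : bidfun x) b :
  W 1 beta b = \sum_(v : 'I_x.+1) (x.+1)%:R^-1 * winprob b [:: (beta v : nat)].
Proof.
rewrite /W (reindex (fun v : 'I_x.+1 => [ffun _ : 'I_1 => v])) /=; last first.
  apply: onW_bij; exists (fun w : {ffun 'I_1 -> 'I_x.+1} => w ord0).
    by move=> v; rewrite ffunE.
  move=> w; apply/ffunP => j; rewrite ffunE; congr (w _).
  by apply: val_inj; case: j => [[|]].
apply: eq_bigr => v _; rewrite enum_I1 /= ffunE expr1; done.
Qed.

Lemma W2E x (beta : bidfun x) b :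
  W 2 beta b = \sum_(v1 : 'I_x.+1) \sum_(v2 : 'I_x.+1)
     ((x.+1)%:R^-1)^+2 * winprob b [:: (beta v1 : nat); (beta v2 : nat)].
Proof.
rewrite pair_bigA /W (reindex (fun p : 'I_x.+1 * 'I_x.+1 =>
   [ffun j : 'I_2 => if j == ord0 then p.1 else p.2])) /=; last first.
  apply: onW_bij; exists (fun w : {ffun 'I_2 -> 'I_x.+1} => (w ord0, w ord_max)).
    by move=> [v1 v2]; rewrite !ffunE.
  move=> w; apply/ffunP => j; rewrite ffunE; case: ifP => [/eqP -> //|] /=.
  move=> hj; congr (w _); apply: val_inj; move: hj; case: j => [[|[|]]] //=.
apply: eq_bigr => [[v1 v2]] _; rewrite enum_I2 /= !ffunE /=.
done.
Qed.

Lemma rX1 x : ((x.+1)%:R^-1 : rat) * (x.+1)%:R = 1.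
Proof. by rewrite mulVf // pnatr_eq0. Qed.

Lemma sum_const_ord x (c : rat) : \sum_(v : 'I_x.+1) c = (x.+1)%:R * c.
Proof. by rewrite sumr_const card_ord mulr_natl. Qed.

Lemma dsum_add x (f : 'I_x.+1 -> rat) c :
  \sum_(v1 : 'I_x.+1) \sum_(v2 : 'I_x.+1) c * ((f v1 + f v2) / 2) =
  c * ((x.+1)%:R * \sum_v f v).
Proof.
have e : forall v1 : 'I_x.+1, \sum_(v2 : 'I_x.+1) c * ((f v1 + f v2) / 2) =
    \sum_(v2 : 'I_x.+1) (c / 2 * f v1 + c / 2 * f v2).
  by move=> v1; apply: eq_bigr => v2 _; field.
rewrite (eq_bigr _ (fun v1 _ => e v1)).
under eq_bigr => v1 _ do rewrite big_split /= sum_const_ord -mulr_sumr.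
rewrite big_split /= -mulr_sumr sum_const_ord -mulr_sumr.
by field.
Qed.

Lemma diff1 x (beta : bidfun x) (b : nat) (U : pred 'I_x.+1) :
  (forall v, b != (beta v : nat)) -> (forall v, (beta v : nat) = b.+1 -> U v) ->
  W 1 beta b.+1 - W 1 beta b <= (x.+1)%:R^-1 * (\sum_v (U v : nat)%:R) / 2.
Proof.
move=> hb hU; rewrite !W1E -sumrB mulr_sumr mulr_suml; apply: ler_sum => v _.
rewrite -mulrBr -mulrA ler_wpM2l ?(ltW (r_gt0 x)) //.
apply: le_trans (wp_step _) _; first by rewrite inE.
rewrite ler_pM2r // ler_nat; case: (boolP (b.+1 \in _)) => //.
by rewrite inE => /eqP/esym/hU ->.
Qed.

Lemma diff2 x (beta : bidfun x) (b : nat) (U : pred 'I_x.+1) :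
  (forall v, b != (beta v : nat)) -> (forall v, (beta v : nat) = b.+1 -> U v) ->
  W 2 beta b.+1 - W 2 beta b <= (x.+1)%:R^-1 * (\sum_v (U v : nat)%:R).
Proof.
move=> hb hU; rewrite !W2E -sumrB.
set r := ((x.+1)%:R^-1 : rat).
have -> : r * (\sum_v (U v : nat)%:R) =
   \sum_(v1 : 'I_x.+1) \sum_(v2 : 'I_x.+1) r^+2 * (((U v1 : nat)%:R + (U v2 : nat)%:R) / 2).
  rewrite dsum_add; set S := \sum_v _.
  have h := rX1 x; rewrite -/r in h.
  transitivity (r * S * (r * (x.+1)%:R)); first by rewrite h mulr1.
  ring.
apply: ler_sum => v1 _; rewrite -sumrB; apply: ler_sum => v2 _.
rewrite -mulrBr ler_wpM2l ?exprn_ge0 ?(ltW (r_gt0 x)) //.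
apply: le_trans (wp_step _) _; first by rewrite !inE negb_or !hb.
rewrite ler_pM2r //.
rewrite !inE; case: (eqVneq b.+1 (beta v1)) => [/esym/hU -> /=|_ /=].
  by rewrite lerDl ler0n.
case: (eqVneq b.+1 (beta v2)) => [/esym/hU -> /=|_ /=].
  by rewrite lerDr ler0n.
by rewrite addr_ge0 ?ler0n.
Qed.

Definition BR x m (beta : bidfun x) := forall s : bidfun x,
  payoff (fun _ : 'I_m => beta) s <= payoff (fun _ : 'I_m => beta) beta.

Lemma optW x m (beta : bidfun x) : BR m beta -> forall v b : 'I_x.+1,
  (v : nat)%:R * W m beta b - (b : nat)%:R <= (v : nat)%:R * W m beta (beta v) - (beta v : nat)%:R.
Proof. by move=> H v b; rewrite -!interimE; apply: opt. Qed.

Lemma inordv x k : (k <= x)%N -> ((inord k : 'I_x.+1) : nat) = k.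
Proof. by move=> h; rewrite inordK // ltnS. Qed.

Lemma ord_top1 x (v : 'I_x.+1) : v != inord x -> (v <= x.-1)%N.
Proof.
move=> h; have hv : (v : nat) != x.
  by apply: contra h => /eqP e; apply/eqP/val_inj; rewrite /= inordK // -e.
have := ltn_ord v; move: hv; lia.
Qed.

Lemma ord_top2 x (v : 'I_x.+1) : (2 <= x)%N -> v != inord x -> v != inord x.-1 -> (v <= x.-2)%N.
Proof.
move=> hx h1 h2; have hv : (v : nat) != x.-1.
  by apply: contra h2 => /eqP e; apply/eqP/val_inj; rewrite /= inordK // -e; exact: ltn_ord.
have := ord_top1 h1; move: hv hx; lia.
Qed.

Lemma arith1 (Y X r d : rat) : 0 <= Y -> Y <= X -> 0 < r -> r * (X + 1) = 1 ->
  1 <= Y * d -> d <= r -> False.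
Proof.
move=> h0 h1 h2 h3 h4 h5.
have : Y * d <= Y * r by rewrite ler_wpM2l.
have : Y * r <= X * r by rewrite ler_wpM2r // ltW.
nra.
Qed.

Lemma W_ge0 x m (beta : bidfun x) b : 0 <= W m beta b.
Proof.
apply: sumr_ge0 => w _; rewrite mulr_ge0 ?wp_ge0 ?exprn_ge0 //; exact: ltW (r_gt0 x).
Qed.

Lemma sum_ind x (u : 'I_x.+1) : \sum_(v : 'I_x.+1) ((v == u) : nat)%:R = 1 :> rat.
Proof. by rewrite (bigD1 u) //= eqxx big1 ?addr0 // => i /negbTE ->. Qed.

Lemma half_le (r : rat) : 0 <= r -> r / 2 <= r.
Proof. move=> h; lra. Qed.

Lemma ho_arith (X a c b : rat) : X * a - b <= X * c - (b + 1) -> 1 <= X * (c - a).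
Proof. move=> h; lra. Qed.

Lemma ho_arith2 (X a c : rat) : X * 1 - (c + 1) <= X * a - c -> X * (1 - a) <= 1.
Proof. move=> h; lra. Qed.

Lemma ho_arith3 (X a w0 : rat) : X * w0 - 0%:R <= X * a - X -> 0 <= X -> 0 <= w0 -> X * (1 - a) <= 1.
Proof. move=> h1 h2 h3; have : 0 <= X * w0 by rewrite mulr_ge0. lra. Qed.

Lemma claim2 x m (beta : bidfun x) : (m = 1 \/ m = 2)%N -> (2 <= x)%N -> BR m beta ->
  ((beta (inord x) : nat) <= (beta (inord x.-1) : nat) + 1)%N.
Proof.
move=> hm hx H; rewrite leqNgt; apply/negP => hlt.
have Hmono := beta_mono H.
set u0 : 'I_x.+1 := inord x; set u1 : 'I_x.+1 := inord x.-1.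
move: hlt; rewrite -/u0 -/u1 => hlt.
set B := (beta u0 : nat) in hlt *; set b := B.-1.
have hB : B = b.+1 by rewrite /b prednK //; apply: leq_ltn_trans hlt.
have hlow : forall v, v != u0 -> ((beta v : nat) < b)%N.
  move=> v hv; have := Hmono v u1; rewrite /u1 inordv ?leq_pred // => /(_ (ord_top1 hv)) h.
  by move: hlt; rewrite hB addn1 ltnS; apply: leq_trans; rewrite ltnS.
have hb : forall v, b != (beta v : nat).
  move=> v; case: (eqVneq v u0) => [->|hv]; first by rewrite -/B hB neq_ltn ltnSn.
  by rewrite neq_ltn (hlow v hv) orbT.
have hU : forall v, (beta v : nat) = b.+1 -> v == u0.
  move=> v e; apply/negPn/negP => hv; have := hlow v hv; rewrite e ltnNge => /negP; apply.
  exact: leqnSn.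
have hd : W m beta b.+1 - W m beta b <= (x.+1)%:R^-1.
  case: hm => ->.
    apply: le_trans (diff1 hb hU) _; rewrite sum_ind mulr1.
    exact/half_le/ltW/r_gt0.
  by apply: le_trans (diff2 hb hU) _; rewrite sum_ind mulr1.
have hbx : (b <= x)%N by apply: leq_trans (leqnSn b) _; rewrite -hB -ltnS ltn_ord.
have ho := optW H u0 (inord b).
move: ho; rewrite inordv // -/B hB /u0 inordv // -natr1 => ho.
apply: (@arith1 x%:R x%:R ((x.+1)%:R^-1) (W m beta b.+1 - W m beta b)) => //.
- exact: r_gt0.
- by rewrite natr1 mulVf // pnatr_eq0.
- move: ho; exact: ho_arith.
Qed.

Lemma dsum_inc x (f : 'I_x.+1 -> rat) c :
  \sum_(v1 : 'I_x.+1) \sum_(v2 : 'I_x.+1) c * (1 - (f v1 + f v2 - f v1 * f v2) / 2) =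
  c * ((x.+1)%:R * (x.+1)%:R - (x.+1)%:R * \sum_v f v + (\sum_v f v) * (\sum_v f v) / 2).
Proof.
have e : forall v1 : 'I_x.+1, \sum_(v2 : 'I_x.+1) c * (1 - (f v1 + f v2 - f v1 * f v2) / 2) =
    \sum_(v2 : 'I_x.+1) ((c - c / 2 * f v1) - (c / 2 - c / 2 * f v1) * f v2).
  by move=> v1; apply: eq_bigr => v2 _; field.
rewrite (eq_bigr _ (fun v1 _ => e v1)).
under eq_bigr => v1 _ do rewrite sumrB sum_const_ord -mulr_sumr.
set S := \sum_i f i.
transitivity (\sum_(v1 : 'I_x.+1) (((x.+1)%:R * c - c / 2 * S) + (c / 2 * S - (x.+1)%:R * c / 2) * f v1)).
  by apply: eq_bigr => v1 _; ring.
rewrite big_split /= sum_const_ord -mulr_sumr -/S.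
by field.
Qed.

Lemma arithC (X r W : rat) : 3 <= X -> 0 < r -> r * (X + 1) = 1 ->
  W <= r ^+ 2 * ((X + 1) * (X + 1) - (X + 1) * 2 + 2 * 2 / 2) -> X * (1 - W) <= 1 -> False.
Proof.
move=> h1 h2 h3 h4 h5.
have e1 : r ^+ 2 * ((X + 1) * (X + 1)) = 1.
  by transitivity ((r * (X + 1)) * (r * (X + 1))); [ring | rewrite h3 mulr1].
have e2 : X * r = 1 - r.
  by transitivity (r * (X + 1) - r); [ring | rewrite h3].
have hr : r <= 1/4 by nra.
have hW : W <= 1 - 2 * r + 2 * r * r.
  apply: le_trans h4 _; rewrite mulrDr mulrBr e1. have -> : r ^+ 2 * ((X + 1) * 2) = 2 * r.
    by transitivity (2 * r * (r * (X + 1))); [ring | rewrite h3 mulr1].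
  rewrite expr2; lra.
have : X * (2 * r - 2 * r * r) <= 1.
  apply: le_trans h5; rewrite ler_wpM2l; lra.
have -> : X * (2 * r - 2 * r * r) = 2 * (1 - r) * (1 - r).
  transitivity (2 * (X * r) * (1 - r)); first ring.
  by rewrite e2.
nra.
Qed.

Lemma caseC x (beta : bidfun x) : (3 <= x)%N -> BR 2 beta ->
  (beta (inord x) : nat) != beta (inord x.-1).
Proof.
move=> hx H; apply/negP => /eqP e.
have Hmono := beta_mono H.
set u0 : 'I_x.+1 := inord x; set u1 : 'I_x.+1 := inord x.-1.
move: e; rewrite -/u0 -/u1 => e.
have hu : u0 != u1.
  apply/negP => /eqP /(congr1 val) /=; rewrite /u0 /u1 !inordK ?ltnS ?leq_pred //.
  move: hx; clear; lia.
set c := (beta u0 : nat) in e *.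
have hall : forall v : 'I_x.+1, ((beta v : nat) <= c)%N.
  by move=> v; apply: Hmono; rewrite /u0 inordv // -ltnS ltn_ord.
set g := fun v : 'I_x.+1 => (v == u0) || (v == u1).
have hg : forall v, g v -> (beta v : nat) = c.
  by move=> w /orP [] /eqP ->.
have hS : \sum_v ((g v : bool) : nat)%:R = 2 :> rat.
  have -> : \sum_v ((g v : bool) : nat)%:R = \sum_v ((((v == u0) : nat)%:R + ((v == u1) : nat)%:R) : rat).
    apply: eq_bigr => v _; rewrite /g; case: (eqVneq v u0) => [->|] /=.
      by rewrite (negbTE hu) addr0.
    by rewrite add0r.
  by rewrite big_split /= !sum_ind.
set r := ((x.+1)%:R^-1 : rat).
have hWc : W 2 beta c <= r ^+ 2 * ((x.+1)%:R * (x.+1)%:R - (x.+1)%:R * 2 + 2 * 2 / 2).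
  have := dsum_inc (fun v => ((g v : bool) : nat)%:R) (r ^+ 2); rewrite hS => <-.
  rewrite W2E; apply: ler_sum => v1 _; apply: ler_sum => v2 _.
  rewrite ler_wpM2l ?exprn_ge0 ?(ltW (r_gt0 x)) //.
  apply: le_trans (wp_le_half _ _) _.
  have : ((g v1 || g v2) : nat)%:R <= ((c \in [:: (beta v1 : nat); (beta v2 : nat)]) : nat)%:R :> rat.
    rewrite ler_nat; case: (boolP (g v1)) => [/hg h|_] /=; first by rewrite inE h eqxx.
    case: (boolP (g v2)) => [/hg h|_] //=; by rewrite !inE h eqxx orbT.
  by case: (g v1); case: (g v2) => /=; rewrite ?mul0r ?mul1r ?mulr0 ?mulr1 ?addr0 ?add0r ?subr0; lra.
have hX : (x%:R : rat) * (1 - W 2 beta c) <= 1.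
  have ho : forall b : 'I_x.+1, (x%:R : rat) * W 2 beta b - (b : nat)%:R <= x%:R * W 2 beta c - c%:R.
    by move=> b; have := optW H u0 b; rewrite /u0 inordv.
  case: (ltnP c x) => hc.
    have := ho (inord c.+1); rewrite inordv //.
    have -> : W 2 beta c.+1 = 1.
      rewrite W2E.
      transitivity (\sum_(v1 : 'I_x.+1) \sum_(v2 : 'I_x.+1) r ^+ 2).
        apply: eq_bigr => v1 _; apply: eq_bigr => v2 _.
        by rewrite wp_top ?mulr1 //= !hall.
      under eq_bigr do rewrite sum_const_ord.
      rewrite sum_const_ord.
      transitivity ((r * (x.+1)%:R) * (r * (x.+1)%:R)); first ring.
      by rewrite /r rX1 mulr1.
    rewrite -natr1 => h; exact: ho_arith2 h.
  have hcx : c = x by apply/eqP; rewrite eqn_leq hc andbT; have := ltn_ord (beta u0).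
  have := ho ord0; rewrite /= hcx => h.
  have := W_ge0 2 beta 0; move: h => h1 h3; apply: (ho_arith3 h1 _ h3); exact: ler0n.
rewrite -natr1 in hWc.
apply: (arithC (X := x%:R) (r := r) _ _ _ hWc hX).
- by rewrite (ler_nat rat 3 x).
- exact: r_gt0.
- by rewrite natr1 /r mulVf // pnatr_eq0.
Qed.

Lemma sum_g2 x (u0 u1 : 'I_x.+1) : u0 != u1 ->
  \sum_v ((((v == u0) || (v == u1)) : bool) : nat)%:R = 2 :> rat.
Proof.
move=> hu.
have -> : \sum_v ((((v == u0) || (v == u1)) : bool) : nat)%:R
   = \sum_v ((((v == u0) : nat)%:R + ((v == u1) : nat)%:R) : rat).
  apply: eq_bigr => v _; case: (eqVneq v u0) => [->|] /=.
    by rewrite (negbTE hu) addr0.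
  by rewrite add0r.
by rewrite big_split /= !sum_ind.
Qed.

Lemma claim1 x m (beta : bidfun x) : (m = 1 \/ m = 2)%N -> (3 <= x)%N -> BR m beta ->
  ((beta (inord x.-1) : nat) <= (beta (inord x.-2) : nat) + 1)%N.
Proof.
move=> hm hx H; rewrite leqNgt; apply/negP => hlt.
have Hmono := beta_mono H.
set u0 : 'I_x.+1 := inord x; set u1 : 'I_x.+1 := inord x.-1; set u2 : 'I_x.+1 := inord x.-2.
move: hlt; rewrite -/u1 -/u2 => hlt.
have hu : u0 != u1.
  apply/negP => /eqP /(congr1 val) /=; rewrite /u0 /u1 !inordK ?ltnS ?leq_pred //.
  move: hx; clear; lia.
set C := (beta u1 : nat) in hlt *; set b := C.-1.
have hB : C = b.+1 by rewrite /b prednK //; apply: leq_ltn_trans hlt.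
have hlow : forall v, v != u0 -> v != u1 -> ((beta v : nat) < b)%N.
  move=> v h0 h1; have := Hmono v u2; rewrite /u2 inordv ?(leq_trans (leq_pred _) (leq_pred _)) //.
  move=> /(_ (ord_top2 (ltnW hx) h0 h1)) h.
  by move: hlt; rewrite hB addn1 ltnS; apply: leq_trans; rewrite ltnS.
have hhigh : forall v, (v == u0) || (v == u1) -> (C <= beta v)%N.
  move=> v /orP [] /eqP ->; last by [].
  by apply: Hmono; rewrite /u0 /u1 !inordv ?leq_pred.
have hb : forall v, b != (beta v : nat).
  move=> v; case: (boolP ((v == u0) || (v == u1))) => [/hhigh h|].
    by rewrite neq_ltn; move: h; rewrite hB => ->.
  by rewrite negb_or => /andP [h0 h1]; rewrite neq_ltn (hlow v h0 h1) orbT.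
have hd : W m beta b.+1 - W m beta b <= (x.+1)%:R^-1.
  case: hm => hm; move: H; rewrite hm => H.
    have hU : forall v, (beta v : nat) = b.+1 -> (v == u0) || (v == u1).
      move=> v e; apply/negPn/negP; rewrite negb_or => /andP [h0 h1].
      by have := hlow v h0 h1; rewrite e ltnNge leqnSn.
    apply: le_trans (diff1 hb hU) _; rewrite sum_g2 //.
    have -> : ((x.+1)%:R^-1 : rat) * 2 / 2 = (x.+1)%:R^-1 by rewrite mulfK.
    by [].
  have hC := caseC hx H.
  have hU : forall v, (beta v : nat) = b.+1 -> v == u1.
    move=> v e; apply/negPn/negP => h1; case: (eqVneq v u0) => [h0|h0].
      by move: hC; rewrite -/u0 -/u1 -h0 e -hB eqxx.
    by have := hlow v h0 h1; rewrite e ltnNge leqnSn.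
  by apply: le_trans (diff2 hb hU) _; rewrite sum_ind mulr1.
have hbx : (b <= x)%N by apply: leq_trans (leqnSn b) _; rewrite -hB -ltnS ltn_ord.
have ho := optW H u1 (inord b).
move: ho; rewrite inordv // -/C hB /u1 inordv ?leq_pred // -natr1 => ho.
apply: (@arith1 (x.-1)%:R x%:R ((x.+1)%:R^-1) (W m beta b.+1 - W m beta b)) => //.
- by rewrite ler_nat leq_pred.
- exact: r_gt0.
- by rewrite natr1 mulVf // pnatr_eq0.
- move: ho; exact: ho_arith.
Qed.

Unset Implicit Arguments.
Local Close Scope ring_scope.

Theorem mainTheorem16 (n x : nat) (beta : bidfun x) :
  (n = 2 \/ n = 3)%N -> (10 <= x)%N ->
  symmetric_equilibrium n beta ->
  ((beta (inord x.-1) : nat) <= (beta (inord x.-2) : nat) + 1)%N /\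
  ((beta (inord x) : nat) <= (beta (inord x.-1) : nat) + 1)%N.
Proof.
move=> hn hx [H _].
have hm : (n.-1 = 1 \/ n.-1 = 2)%N by case: hn => ->; [left|right].
split.
- apply: (claim1 hm) => //; first exact: leq_trans hx.
- apply: (claim2 hm) => //; exact: leq_trans hx.
Qed.
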